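(* Let $k\ge1$ and $B>0$ with $B\neq2$ be constants and let $F$ be as defined below. For every $(\alpha_L,\alpha_R)\in[0,1]^2$, the iterates $F^{(t)}(\alpha_L,\alpha_R)=F\circ\cdots\circ F(\alpha_L,\alpha_R)$ ($t$ times) converge, as $t\to\infty$, to the unique fixed point of $F$ (which is $(1/2,1/2)$ if $B<2$, and the unique solution in $(1/2,1)^2$ of $\exp(B\sqrt k(1-2\alpha_R))=\frac{1-\alpha_L}{\alpha_L}$, $\exp(\frac{B}{\sqrt k}(1-2\alpha_L))=\frac{1-\alpha_R}{\alpha_R}$ if $B>2$).
   Context: The map $F$: for $(\alpha_L,\alpha_R)\in[0,1]^2$, if $\sqrt{\alpha_L\alpha_R}\,B\le1$ set $(\theta_L,\theta_R)=(0,0)$; otherwise let $(\theta_L,\theta_R)$ be the unique solution with $\theta_L,\theta_R>0$ of $\exp(-B\sqrt k\,\alpha_R\theta_R)=1-\theta_L$ and $\exp(-\frac{B}{\sqrt k}\alpha_L\theta_L)=1-\theta_R$. Then $F(\alpha_L,\alpha_R)=\big(\tfrac12(1+\theta_L\alpha_L),\tfrac12(1+\theta_R\alpha_R)\big)$. *)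

(* Defs.v *)
From Stdlib Require Import Reals Lra ClassicalEpsilon.
Open Scope R_scope.

Definition theta_spec (B k aL aR : R) (t : R * R) : Prop :=
  0 < fst t /\ 0 < snd t /\
  exp (- (B * sqrt k * aR * snd t)) = 1 - fst t /\
  exp (- ((B / sqrt k) * aL * fst t)) = 1 - snd t.

Definition theta (B k aL aR : R) : R * R :=
  if Rle_dec (sqrt (aL * aR) * B) 1 then (0, 0)
  else epsilon (inhabits (0, 0)) (theta_spec B k aL aR).

Definition F (B k : R) (a : R * R) : R * R :=
  let t := theta B k (fst a) (snd a) in
  ((1 + fst t * fst a) / 2, (1 + snd t * snd a) / 2).

Definition in_unit_square (a : R * R) : Prop :=
  0 <= fst a <= 1 /\ 0 <= snd a <= 1.

(* Main.v *)
Require Import Defs.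
From Stdlib Require Import Reals Lra Lia ClassicalEpsilon.
From Coquelicot Require Import Coquelicot.
Open Scope R_scope.


Definition decr_ratio (f : R -> R) := forall x y, 0 < x -> x < y -> x * f y < y * f x.
Definition pos_incr (f : R -> R) := forall x y, 0 < x -> x < y -> 0 < f x /\ f x < f y.

Lemma ratio_lemma (f f' : R -> R) :
  (forall x, derivable_pt_lim f x (f' x)) -> f 0 = 0 ->
  (forall x y, 0 <= x -> x < y -> f' y < f' x) ->
  (forall x, 0 <= x -> 0 < f' x) ->
  decr_ratio f /\ pos_incr f /\ (forall x, 0 < x -> f x < f' 0 * x).
Proof.
  intros Hd H0 Hdec Hpos.
  assert (M : forall a b, a < b -> exists c, f b - f a = f' c * (b - a) /\ a < c < b).
  { intros a b hab. apply MVT_cor2; auto. }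
  split; [|split].
  - intros x y hx hxy.
    destruct (M 0 x hx) as [c1 [e1 h1]].
    destruct (M x y hxy) as [c2 [e2 h2]].
    assert (f' c2 < f' c1) by (apply Hdec; lra).
    rewrite H0 in e1.
    assert (f y = f x + f' c2 * (y - x)) by lra.
    assert (f x = f' c1 * x) by lra.
    rewrite H1. rewrite H2.
    assert (0 < x * (y - x)) by (apply Rmult_lt_0_compat; lra).
    nra.
  - intros x y hx hxy.
    destruct (M 0 x hx) as [c1 [e1 h1]].
    destruct (M x y hxy) as [c2 [e2 h2]].
    rewrite H0 in e1.
    assert (0 < f' c1) by (apply Hpos; lra).
    assert (0 < f' c2) by (apply Hpos; lra).
    split; nra.
  - intros x hx.
    destruct (M 0 x hx) as [c1 [e1 h1]].
    assert (f' c1 < f' 0) by (apply Hdec; lra).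
    rewrite H0 in e1. nra.
Qed.

Definition phi (z : R) := 1 - exp (- z).
Definition T (z : R) := (exp z - 1) / (exp z + 1).

Lemma phi_deriv x : derivable_pt_lim phi x (exp (- x)).
Proof. apply is_derive_Reals. unfold phi. auto_derive; auto. ring. Qed.

Lemma T_deriv x : derivable_pt_lim T x (2 * exp x / (exp x + 1)^2).
Proof.
  apply is_derive_Reals. unfold T.
  assert (0 < exp x) by apply exp_pos.
  auto_derive. lra. field. lra.
Qed.

Lemma phi_props : decr_ratio phi /\ pos_incr phi /\ (forall x, 0 < x -> phi x < x).
Proof.
  destruct (ratio_lemma phi (fun x => exp (- x))) as [A [B C]].
  - apply phi_deriv.
  - unfold phi. rewrite Ropp_0, exp_0. ring.
  - intros x y hx hxy. apply exp_increasing. lra.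
  - intros. apply exp_pos.
  - split; [exact A|split; [exact B|]]. intros x hx. specialize (C x hx).
    rewrite Ropp_0, exp_0 in C. lra.
Qed.

Lemma T_props : decr_ratio T /\ pos_incr T /\ (forall x, 0 < x -> T x < x / 2).
Proof.
  destruct (ratio_lemma T (fun x => 2 * exp x / (exp x + 1)^2)) as [A [B C]].
  - apply T_deriv.
  - unfold T. rewrite exp_0. field.
  - intros x y hx hxy.
    assert (1 <= exp x). { rewrite <- exp_0. destruct hx as [hx|hx]. left; apply exp_increasing; lra. subst; lra. }
    assert (exp x < exp y) by (apply exp_increasing; lra).
    set (u := exp x) in *. set (v := exp y) in *.
    apply Rmult_lt_reg_r with ((u+1)^2 * (v+1)^2).
    { apply Rmult_lt_0_compat; apply pow_lt; lra. }
    unfold Rdiv. field_simplify; try lra.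
    assert (0 < (v - u) * (u * v - 1)) by (apply Rmult_lt_0_compat; nra). nra.
  - intros x hx. assert (0 < exp x) by apply exp_pos.
    apply Rdiv_lt_0_compat. lra. apply pow_lt. lra.
  - split; [exact A|split; [exact B|]]. intros x hx. specialize (C x hx).
    rewrite exp_0 in C. lra.
Qed.

Lemma comp_props f g : decr_ratio f -> pos_incr f -> decr_ratio g -> pos_incr g ->
  decr_ratio (fun x => f (g x)) /\ pos_incr (fun x => f (g x)).
Proof.
  intros df pf dg pg. split.
  - intros x y hx hxy.
    destruct (pg x y hx hxy) as [g1 g2].
    specialize (df (g x) (g y) g1 g2).
    specialize (dg x y hx hxy).
    destruct (pf (g x) (g y) g1 g2) as [f1 f2].
    assert (0 < f (g y)) by lra.
    assert (h1 : x * g y * f (g y) < y * g x * f (g y)) by (apply Rmult_lt_compat_r; lra).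
    assert (h2 : y * (g x * f (g y)) < y * (g y * f (g x))) by (apply Rmult_lt_compat_l; lra).
    assert (h3 : g y * (x * f (g y)) < g y * (y * f (g x))) by nra.
    apply Rmult_lt_reg_l in h3; lra.
  - intros x y hx hxy. destruct (pg x y hx hxy) as [g1 g2].
    destruct (pf (g x) (g y) g1 g2). lra.
Qed.

Lemma scale_props f l : 0 < l -> decr_ratio f -> pos_incr f ->
  decr_ratio (fun x => f (l * x)) /\ pos_incr (fun x => f (l * x)).
Proof.
  intros hl df pf. split.
  - intros x y hx hxy. assert (0 < l * x) by nra. assert (l*x < l*y) by nra.
    specialize (df _ _ H H0). nra.
  - intros x y hx hxy. apply pf; nra.
Qed.

Lemma phi_le x y : x <= y -> phi x <= phi y.
Proof. intros h. unfold phi. destruct h as [h|h]. assert (exp (-y) < exp (-x)) by (apply exp_increasing; lra). lra. subst; lra. Qed.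

Lemma phi_nonneg x : 0 <= x -> 0 <= phi x.
Proof. intros h. pose proof (phi_le 0 x h). unfold phi in *. rewrite Ropp_0, exp_0 in H. lra. Qed.

Lemma phi_lt1 x : phi x < 1.
Proof. unfold phi. pose proof (exp_pos (-x)). lra. Qed.

Lemma h_props A D : 0 < A -> 0 < D ->
  decr_ratio (fun x => phi (A * phi (D * x))) /\ pos_incr (fun x => phi (A * phi (D * x))).
Proof.
  intros hA hD. destruct phi_props as [d1 [p1 _]].
  destruct (scale_props phi A hA d1 p1) as [d2 p2].
  destruct (scale_props phi D hD d1 p1) as [d3 p3].
  exact (comp_props _ _ d2 p2 d3 p3).
Qed.

Lemma sys_mono A D A' D' s s' : 0 < A -> A <= A' -> 0 < D -> D <= D' -> 0 < s -> 0 < s' ->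
  phi (A * phi (D * s)) = s -> phi (A' * phi (D' * s')) = s' -> s <= s'.
Proof.
  intros hA hA' hD hD' hs hs' e e'.
  destruct (Rle_or_lt s s') as [h|h]; auto. exfalso.
  destruct (h_props A D hA hD) as [dr _].
  specialize (dr s' s hs' h). simpl in dr. rewrite e in dr.
  assert (s' < phi (A * phi (D * s'))) by nra.
  assert (phi (A * phi (D * s')) <= phi (A' * phi (D' * s'))).
  { apply phi_le. assert (phi (D * s') <= phi (D' * s')) by (apply phi_le; nra).
    assert (0 <= phi (D * s')) by (apply phi_nonneg; nra). nra. }
  lra.
Qed.

Section Sys.
Variables k B : R.
Hypothesis hk : 1 <= k.
Hypothesis hB : 0 < B.

Lemma sqk_pos : 0 < sqrt k.
Proof. apply sqrt_lt_R0. lra. Qed.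

Lemma c_pos : 0 < B * sqrt k.
Proof. pose proof sqk_pos. nra. Qed.
Lemma d_pos : 0 < B / sqrt k.
Proof. pose proof sqk_pos. apply Rdiv_lt_0_compat; lra. Qed.
Lemma cd : (B * sqrt k) * (B / sqrt k) = B * B.
Proof. pose proof sqk_pos. field. lra. Qed.

Lemma spec_props aL aR t : 0 <= aL -> 0 <= aR -> theta_spec B k aL aR t ->
  0 < fst t < 1 /\ 0 < snd t < 1 /\ 0 < aL /\ 0 < aR /\
  phi (B * sqrt k * aR * phi (B / sqrt k * aL * fst t)) = fst t /\
  phi (B / sqrt k * aL * fst t) = snd t.
Proof.
  intros hL hR [t1 [t2 [e1 e2]]].
  pose proof (exp_pos (- (B * sqrt k * aR * snd t))).
  pose proof (exp_pos (- (B / sqrt k * aL * fst t))).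
  assert (e2' : phi (B / sqrt k * aL * fst t) = snd t) by (unfold phi; lra).
  assert (aL <> 0). { intro z. subst aL. rewrite Rmult_0_r, Rmult_0_l, Ropp_0, exp_0 in e2. lra. }
  assert (aR <> 0). { intro z. subst aR. rewrite Rmult_0_r, Rmult_0_l, Ropp_0, exp_0 in e1. lra. }
  repeat split; try lra.
  rewrite e2'. unfold phi. lra.
Qed.

Lemma spec_mono aL aR aL' aR' t t' : 0 <= aL -> 0 <= aR -> aL <= aL' -> aR <= aR' ->
  theta_spec B k aL aR t -> theta_spec B k aL' aR' t' ->
  fst t <= fst t' /\ snd t <= snd t'.
Proof.
  intros hL hR hL' hR' s s'.
  destruct (spec_props _ _ _ hL hR s) as [a1 [a2 [a3 [a4 [a5 a6]]]]].
  destruct (spec_props aL' aR' t' ltac:(lra) ltac:(lra) s') as [b1 [b2 [b3 [b4 [b5 b6]]]]].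
  pose proof c_pos. pose proof d_pos.
  assert (fst t <= fst t').
  { apply (sys_mono (B * sqrt k * aR) (B / sqrt k * aL) (B * sqrt k * aR') (B / sqrt k * aL')); try nra. }
  split; auto. rewrite <- a6, <- b6. apply phi_le.
  assert (B / sqrt k * aL <= B / sqrt k * aL') by nra.
  assert (0 <= B / sqrt k * aL) by nra.
  nra.
Qed.

Lemma spec_threshold aL aR t : 0 <= aL -> 0 <= aR -> theta_spec B k aL aR t ->
  1 < sqrt (aL * aR) * B.
Proof.
  intros hL hR s.
  destruct (spec_props _ _ _ hL hR s) as [a1 [a2 [a3 [a4 [a5 a6]]]]].
  destruct phi_props as [_ [_ pl]].
  pose proof c_pos. pose proof d_pos.
  assert (snd t < B / sqrt k * aL * fst t). { rewrite <- a6. apply pl. apply Rmult_lt_0_compat; [apply Rmult_lt_0_compat|]; lra. }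
  assert (fst t < B * sqrt k * aR * snd t). { rewrite <- a5 at 1. rewrite a6. apply pl. apply Rmult_lt_0_compat; [apply Rmult_lt_0_compat|]; lra. }
  assert (1 < (B * sqrt k) * (B / sqrt k) * aL * aR).
  { assert (fst t < (B * sqrt k * aR) * (B / sqrt k * aL * fst t)).
    { apply Rlt_le_trans with (1 := H2). apply Rmult_le_compat_l; nra. }
    nra. }
  rewrite cd in H3.
  assert (0 <= sqrt (aL * aR)) by apply sqrt_pos.
  assert (sqrt (aL * aR) * sqrt (aL * aR) = aL * aR) by (apply sqrt_sqrt; nra).
  assert (1 < (sqrt (aL * aR) * B) * (sqrt (aL * aR) * B)).
  { replace ((sqrt (aL * aR) * B) * (sqrt (aL * aR) * B)) with (B * B * (sqrt (aL * aR) * sqrt (aL * aR))) by ring.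
    rewrite H5. lra. }
  assert (0 <= sqrt (aL * aR) * B) by nra.
  nra.
Qed.

End Sys.

Lemma phi_lb z : 0 <= z -> z <= phi z * (1 + z).
Proof.
  intros hz. unfold phi. pose proof (exp_ineq1_le z).
  pose proof (exp_pos (-z)).
  assert (exp (-z) * exp z = 1) by (rewrite <- exp_plus; replace (-z+z) with 0 by ring; apply exp_0).
  nra.
Qed.

Lemma fixed_exists A D : 0 < A -> 0 < D -> 1 < A * D ->
  exists s, 0 < s /\ phi (A * phi (D * s)) = s.
Proof.
  intros hA hD hr.
  set (f := fun s => s - phi (A * phi (D * s))).
  assert (cf : continuity f).
  { intro x. apply continuity_pt_filterlim. apply (ex_derive_continuous f x).
    unfold f, phi. auto_derive. auto. }
  set (r := A * D) in *.
  set (s0 := (r - 1) / (2 * (D + r))).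
  assert (hs0 : 0 < s0) by (unfold s0; apply Rdiv_lt_0_compat; lra).
  assert (hs0' : s0 < 1).
  { unfold s0. apply Rmult_lt_reg_r with (2 * (D + r)). lra. field_simplify; lra. }
  assert (hs0e : (r + D) * s0 = (r - 1) / 2) by (unfold s0; field; lra).
  assert (f1 : f s0 < 0).
  { unfold f. set (z1 := D * s0). set (w := phi z1). set (z2 := A * w).
    assert (h1 : z1 <= w * (1 + z1)) by (apply phi_lb; unfold z1; nra).
    assert (0 <= w) by (apply phi_nonneg; unfold z1; nra).
    assert (h2 : z2 <= phi z2 * (1 + z2)) by (apply phi_lb; unfold z2; nra).
    destruct (Rle_or_lt (phi z2) s0) as [h|h]; [|lra]. exfalso.
    assert (z2 <= s0 * (1 + z2)) by (assert (0 <= z2) by (unfold z2; nra); nra).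
    assert (h3 : z2 * (1 - s0) <= s0) by nra.
    assert (h4 : A * z1 <= z2 * (1 + z1)) by (unfold z2; nra).
    assert (h5 : A * z1 * (1 - s0) <= s0 * (1 + z1)).
    { assert (0 <= 1 + z1) by (unfold z1; nra). nra. }
    unfold z1 in h5.
    assert (h6 : r * s0 * (1 - s0) <= s0 * (1 + D * s0)) by (unfold r; nra).
    assert (r * (1 - s0) <= 1 + D * s0) by nra.
    nra. }
  assert (f2 : 0 < f 1).
  { unfold f. pose proof (phi_lt1 (A * phi (D * 1))). lra. }
  destruct (IVT f s0 1 cf hs0' f1 f2) as [s [hs e]].
  exists s. split. lra. unfold f in e. lra.
Qed.

Section Sys2.
Variables k B : R.
Hypothesis hk : 1 <= k.
Hypothesis hB : 0 < B.

Lemma spec_exists aL aR : 0 <= aL -> 0 <= aR -> 1 < sqrt (aL * aR) * B ->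
  exists t, theta_spec B k aL aR t.
Proof.
  intros hL hR hs.
  pose proof (c_pos k B hk hB). pose proof (d_pos k B hk hB). pose proof (cd k B hk).
  assert (hp : 0 < aL * aR).
  { destruct (Rle_or_lt (aL * aR) 0) as [h|h]; auto.
    assert (aL * aR = 0) by nra. rewrite H2, sqrt_0 in hs. lra. }
  assert (0 < aL) by nra. assert (0 < aR) by nra.
  assert (sqrt (aL * aR) * sqrt (aL * aR) = aL * aR) by (apply sqrt_sqrt; nra).
  assert (1 < B * B * (aL * aR)).
  { assert (0 <= sqrt (aL * aR)) by apply sqrt_pos.
    assert (E : (sqrt (aL * aR) * B) * (sqrt (aL * aR) * B) = B * B * (sqrt (aL * aR) * sqrt (aL * aR))) by ring.
    rewrite H4 in E. nra. }
  destruct (fixed_exists (B * sqrt k * aR) (B / sqrt k * aL)) as [s [s1 s2]].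
  - apply Rmult_lt_0_compat; lra.
  - apply Rmult_lt_0_compat; lra.
  - replace (B * sqrt k * aR * (B / sqrt k * aL)) with ((B * sqrt k) * (B / sqrt k) * (aL * aR)) by ring.
    rewrite H1. lra.
  - exists (s, phi (B / sqrt k * aL * s)). unfold theta_spec; simpl.
    assert (0 < phi (B / sqrt k * aL * s)).
    { destruct phi_props as [_ [pp _]].
      assert (0 < B / sqrt k * aL * s) by (apply Rmult_lt_0_compat; [apply Rmult_lt_0_compat|]; lra).
      destruct (pp _ (2 * (B / sqrt k * aL * s)) H6) as [pa _]; [lra|exact pa]. }
    repeat split; auto.
    + unfold phi in s2 at 1. lra.
    + unfold phi. ring.
Qed.
End Sys2.

Section Dyn.
Variables k B : R.
Hypothesis hk : 1 <= k.
Hypothesis hB : 0 < B.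

Lemma theta_char aL aR : 0 <= aL -> 0 <= aR ->
  (sqrt (aL * aR) * B <= 1 /\ theta B k aL aR = (0, 0)) \/
  (1 < sqrt (aL * aR) * B /\ theta_spec B k aL aR (theta B k aL aR)).
Proof.
  intros hL hR. unfold theta. destruct (Rle_dec (sqrt (aL * aR) * B) 1) as [h|h].
  - left; auto.
  - right. split. lra. apply epsilon_spec.
    apply (spec_exists k B hk hB aL aR hL hR). lra.
Qed.

Lemma theta_eqs aL aR : 0 <= aL -> 0 <= aR ->
  0 <= fst (theta B k aL aR) < 1 /\ 0 <= snd (theta B k aL aR) < 1 /\
  exp (- (B * sqrt k * aR * snd (theta B k aL aR))) = 1 - fst (theta B k aL aR) /\
  exp (- ((B / sqrt k) * aL * fst (theta B k aL aR))) = 1 - snd (theta B k aL aR).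
Proof.
  intros hL hR. destruct (theta_char aL aR hL hR) as [[_ e]|[_ s]].
  - rewrite e; simpl. rewrite !Rmult_0_r, Ropp_0, exp_0. repeat split; lra.
  - pose proof (spec_props k B aL aR _ hL hR s) as [p1 [p2 _]].
    destruct s as [_ [_ [e1 e2]]]. repeat split; lra.
Qed.

Definition Rel (x y : R * R) : Prop :=
  fst x * exp (- (B * sqrt k * (2 * snd y - 1))) = fst x - 2 * fst y + 1 /\
  snd x * exp (- (B / sqrt k * (2 * fst y - 1))) = snd x - 2 * snd y + 1.

Lemma F_props a : in_unit_square a ->
  1/2 <= fst (F B k a) <= 1 /\ 1/2 <= snd (F B k a) <= 1 /\ Rel a (F B k a).
Proof.
  intros [[a1 a2] [a3 a4]]. destruct a as [aL aR]; simpl in *.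
  destruct (theta_eqs aL aR a1 a3) as [t1 [t2 [e1 e2]]].
  unfold F; simpl. set (t := theta B k aL aR) in *.
  repeat split; try nra.
  - simpl. replace (2 * ((1 + snd t * aR) / 2) - 1) with (aR * snd t) by field.
    rewrite <- Rmult_assoc, e1. field.
  - simpl. replace (2 * ((1 + fst t * aL) / 2) - 1) with (aL * fst t) by field.
    rewrite <- Rmult_assoc, e2. field.
Qed.

Lemma F_square a : in_unit_square a -> in_unit_square (F B k a).
Proof. intros h. destruct (F_props a h) as [p1 [p2 _]]. split; lra. Qed.

Lemma F_mono a a' : in_unit_square a -> in_unit_square a' ->
  fst a <= fst a' -> snd a <= snd a' ->
  fst (F B k a) <= fst (F B k a') /\ snd (F B k a) <= snd (F B k a').
Proof.
  intros [[a1 a2] [a3 a4]] [[b1 b2] [b3 b4]] hl hr.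
  destruct a as [aL aR]; destruct a' as [aL' aR']; simpl in *.
  assert (ht : fst (theta B k aL aR) <= fst (theta B k aL' aR') /\
               snd (theta B k aL aR) <= snd (theta B k aL' aR')).
  { destruct (theta_eqs aL' aR' b1 b3) as [t1 [t2 _]].
    destruct (theta_char aL aR a1 a3) as [[_ e]|[h s]].
    - rewrite e; simpl; lra.
    - destruct (theta_char aL' aR' b1 b3) as [[h' _]|[_ s']].
      + exfalso. assert (sqrt (aL * aR) <= sqrt (aL' * aR')).
        { apply sqrt_le_1_alt. nra. }
        nra.
      + apply (spec_mono k B hk hB aL aR aL' aR'); auto. }
  destruct (theta_eqs aL aR a1 a3) as [t1 [t2 _]].
  unfold F; simpl. split; apply Rmult_le_compat_r; try lra; nra.
Qed.

Lemma exp_lt1 x : x < 0 -> exp x < 1.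
Proof. intros h. rewrite <- exp_0. apply exp_increasing. exact h. Qed.

Definition Efix (q : R * R) := Rel q q.

Lemma Efix_cases q : Efix q -> 1/2 <= fst q <= 1 -> 1/2 <= snd q <= 1 ->
  q = (1/2, 1/2) \/ (1/2 < fst q < 1 /\ 1/2 < snd q < 1).
Proof.
  intros [e1 e2] h1 h2. destruct q as [x y]; simpl in *.
  pose proof (c_pos k B hk hB). pose proof (d_pos k B hk hB).
  pose proof (exp_pos (- (B * sqrt k * (2 * y - 1)))).
  pose proof (exp_pos (- (B / sqrt k * (2 * x - 1)))).
  destruct (Req_dec y (1/2)) as [hy|hy].
  - subst y. replace (- (B * sqrt k * (2 * (1/2) - 1))) with 0 in e1 by field.
    rewrite exp_0 in e1. assert (x = 1/2) by lra. subst. left; auto.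
  - right. assert (1/2 < y) by lra.
    assert (exp (- (B * sqrt k * (2 * y - 1))) < 1).
    { apply exp_lt1. assert (0 < B * sqrt k * (2 * y - 1)) by nra. lra. }
    assert (1/2 < x) by nra.
    assert (exp (- (B / sqrt k * (2 * x - 1))) < 1).
    { apply exp_lt1. assert (0 < B / sqrt k * (2 * x - 1)) by nra. lra. }
    split; split; nra.
Qed.

Lemma E_to_F q : 1/2 < fst q < 1 -> 1/2 < snd q < 1 -> Efix q -> F B k q = q.
Proof.
  intros h1 h2 [e1 e2]. destruct q as [x y]; simpl in *.
  pose proof (sqk_pos k hk).
  set (ts := (2 - 1/x, 2 - 1/y)).
  assert (sp : theta_spec B k x y ts).
  { unfold theta_spec, ts; simpl. repeat split.
    - apply Rmult_lt_reg_r with x. lra. field_simplify; lra.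
    - apply Rmult_lt_reg_r with y. lra. field_simplify; lra.
    - replace (B * sqrt k * y * (2 - 1 / y)) with (B * sqrt k * (2 * y - 1)) by (field; repeat split; intro; lra).
      apply Rmult_eq_reg_l with x; [rewrite e1; field; intro; lra | intro; lra].
    - replace (B / sqrt k * x * (2 - 1 / x)) with (B / sqrt k * (2 * x - 1)) by (field; repeat split; intro; lra).
      apply Rmult_eq_reg_l with y; [rewrite e2; field; intro; lra | intro; lra]. }
  assert (hth : theta B k x y = ts).
  { destruct (theta_char x y ltac:(lra) ltac:(lra)) as [[h _]|[_ s]].
    - pose proof (spec_threshold k B hk hB x y ts ltac:(lra) ltac:(lra) sp). lra.
    - destruct (spec_mono k B hk hB x y x y _ _ ltac:(lra) ltac:(lra) ltac:(lra) ltac:(lra) s sp).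
      destruct (spec_mono k B hk hB x y x y _ _ ltac:(lra) ltac:(lra) ltac:(lra) ltac:(lra) sp s).
      destruct (theta B k x y) as [u v]; destruct ts as [u' v']; simpl in *. f_equal; lra. }
  unfold F; simpl. rewrite hth. unfold ts; simpl. f_equal; field; repeat split; intro; lra.
Qed.

Lemma E_T q : 1/2 < fst q < 1 -> 1/2 < snd q < 1 -> Efix q ->
  2 * fst q - 1 = T (B * sqrt k * (2 * snd q - 1)) /\
  2 * snd q - 1 = T (B / sqrt k * (2 * fst q - 1)).
Proof.
  intros h1 h2 [e1 e2]. destruct q as [x y]; simpl in *.
  unfold T. split.
  - set (z := B * sqrt k * (2 * y - 1)) in *.
    assert (exp (- z) * exp z = 1) by (rewrite <- exp_plus; replace (-z+z) with 0 by ring; apply exp_0).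
    pose proof (exp_pos z).
    apply Rmult_eq_reg_r with (exp z + 1); [|lra]. field_simplify; [|lra].
    assert (x * exp (- z) * exp z = (x - 2 * x + 1) * exp z) by (rewrite e1; auto).
    nra.
  - set (z := B / sqrt k * (2 * x - 1)) in *.
    assert (exp (- z) * exp z = 1) by (rewrite <- exp_plus; replace (-z+z) with 0 by ring; apply exp_0).
    pose proof (exp_pos z).
    apply Rmult_eq_reg_r with (exp z + 1); [|lra]. field_simplify; [|lra].
    assert (y * exp (- z) * exp z = (y - 2 * y + 1) * exp z) by (rewrite e2; auto).
    nra.
Qed.

Lemma E_unique q q' : 1/2 < fst q < 1 -> 1/2 < snd q < 1 -> Efix q ->
  1/2 < fst q' < 1 -> 1/2 < snd q' < 1 -> Efix q' -> q = q'.
Proof.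
  intros h1 h2 e h1' h2' e'.
  destruct (E_T q h1 h2 e) as [x1 y1]. destruct (E_T q' h1' h2' e') as [x2 y2].
  pose proof (c_pos k B hk hB). pose proof (d_pos k B hk hB).
  destruct T_props as [dT [pT _]].
  destruct (scale_props T _ H dT pT) as [d1 p1].
  destruct (scale_props T _ H0 dT pT) as [d2 p2].
  destruct (comp_props _ _ d1 p1 d2 p2) as [dK _]. simpl in dK.
  set (x := 2 * fst q - 1) in *. set (x' := 2 * fst q' - 1) in *.
  assert (ex : x = T (B * sqrt k * T (B / sqrt k * x))) by (rewrite <- y1; exact x1).
  assert (ex' : x' = T (B * sqrt k * T (B / sqrt k * x'))) by (rewrite <- y2; exact x2).
  assert (x = x').
  { destruct (Rtotal_order x x') as [h|[h|h]]; auto; exfalso.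
    - specialize (dK x x' ltac:(unfold x; lra) h). cbv beta in dK. rewrite <- ex, <- ex' in dK. lra.
    - specialize (dK x' x ltac:(unfold x'; lra) h). cbv beta in dK. rewrite <- ex, <- ex' in dK. lra. }
  assert (fst q = fst q') by (unfold x, x' in H1; lra).
  assert (snd q = snd q') by (rewrite H1 in y1; lra).
  destruct q, q'; simpl in *; subst; auto.
Qed.

Lemma E_none q : B <= 2 -> 1/2 < fst q < 1 -> 1/2 < snd q < 1 -> Efix q -> False.
Proof.
  intros hb h1 h2 e. destruct (E_T q h1 h2 e) as [x1 y1].
  pose proof (c_pos k B hk hB). pose proof (d_pos k B hk hB). pose proof (cd k B hk).
  destruct T_props as [_ [_ Tl]].
  set (x := 2 * fst q - 1) in *. set (y := 2 * snd q - 1) in *.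
  assert (x < B * sqrt k * y / 2) by (rewrite x1; apply Tl; unfold y; nra).
  assert (y < B / sqrt k * x / 2) by (rewrite y1; apply Tl; unfold x; nra).
  assert (x < (B * sqrt k) * (B / sqrt k) * x / 4).
  { apply Rlt_le_trans with (1 := H2). unfold y in *. nra. }
  rewrite H1 in H4. assert (B * B <= 4) by nra. assert (0 < x) by (unfold x; lra).
  assert (B * B * x <= 4 * x) by nra. lra.
Qed.

Lemma half_F : B <= 2 -> F B k (1/2, 1/2) = (1/2, 1/2).
Proof.
  intros hb. unfold F; simpl.
  assert (sqrt (1/2 * (1/2)) = 1/2).
  { replace (1/2 * (1/2)) with ((1/2)²) by (unfold Rsqr; ring). apply sqrt_Rsqr. lra. }
  unfold theta. rewrite H. destruct (Rle_dec (1/2 * B) 1); [|lra]. simpl. f_equal; field.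
Qed.

Lemma half_notF : 2 < B -> 1/2 < fst (F B k (1/2, 1/2)).
Proof.
  intros hb.
  assert (sqrt (1/2 * (1/2)) = 1/2).
  { replace (1/2 * (1/2)) with ((1/2)²) by (unfold Rsqr; ring). apply sqrt_Rsqr. lra. }
  destruct (theta_char (1/2) (1/2) ltac:(lra) ltac:(lra)) as [[h _]|[_ s]].
  - rewrite H in h; lra.
  - destruct s as [s1 _]. unfold F; simpl. nra.
Qed.

End Dyn.

Lemma cv_ext u v l : (forall n, u n = v n) -> Un_cv u l -> Un_cv v l.
Proof. intros h c eps he. destruct (c eps he) as [N hN]. exists N. intros n hn. rewrite <- h. auto. Qed.

Lemma cv_shift u l : Un_cv u l -> Un_cv (fun n => u (S n)) l.
Proof. intros c eps he. destruct (c eps he) as [N hN]. exists N. intros n hn. apply hN. lia. Qed.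

Lemma cv_const c : Un_cv (fun _ => c) c.
Proof. intros eps he. exists 0%nat. intros. unfold R_dist. rewrite Rminus_diag, Rabs_R0. lra. Qed.

Lemma cv_squeeze l u s p : (forall n, l n <= s (S n) <= u n) -> Un_cv l p -> Un_cv u p -> Un_cv s p.
Proof.
  intros h cl cu eps he. destruct (cl eps he) as [N1 h1]. destruct (cu eps he) as [N2 h2].
  exists (S (max N1 N2)). intros n hn. destruct n as [|m]; [lia|].
  specialize (h1 m ltac:(lia)). specialize (h2 m ltac:(lia)). specialize (h m).
  unfold R_dist in *. apply Rabs_def1; apply Rabs_def2 in h1; apply Rabs_def2 in h2; lra.
Qed.

Lemma cv_bound_le u l c : (forall n, u n <= c) -> Un_cv u l -> l <= c.
Proof. intros h cu. apply (@Rle_cv_lim u (fun _ => c)); auto. apply cv_const. Qed.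
Lemma cv_bound_ge u l c : (forall n, c <= u n) -> Un_cv u l -> c <= l.
Proof. intros h cu. apply (@Rle_cv_lim (fun _ => c) u); auto. apply cv_const. Qed.

Section Main.
Variables k B : R.
Hypothesis hk : 1 <= k.
Hypothesis hB : 0 < B.

Definition le2 (a b : R * R) := fst a <= fst b /\ snd a <= snd b.

Lemma iter_square a t : in_unit_square a -> in_unit_square (Nat.iter t (F B k) a).
Proof. intros h. induction t; simpl; auto. apply F_square; auto. Qed.

Lemma iter_mono a a' t : in_unit_square a -> in_unit_square a' -> le2 a a' ->
  le2 (Nat.iter t (F B k) a) (Nat.iter t (F B k) a').
Proof.
  intros ha ha' h. induction t; simpl; auto.
  destruct IHt. apply F_mono; auto; apply iter_square; auto.
Qed.

Lemma limit_fix (x : nat -> R * R) pL pR :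
  (forall t, x (S t) = F B k (x t)) -> (forall t, in_unit_square (x t)) ->
  Un_cv (fun t => fst (x t)) pL -> Un_cv (fun t => snd (x t)) pR ->
  Efix k B (pL, pR).
Proof.
  intros hx hs c1 c2.
  assert (R1 : forall t, Rel k B (x t) (x (S t))).
  { intro t. rewrite hx. apply F_props; auto. }
  assert (ce : forall v l, Un_cv v l -> Un_cv (fun t => exp (v t)) (exp l)).
  { intros v l cv. apply (continuity_seq exp v l); auto.
    apply derivable_continuous_pt. apply derivable_exp. }
  assert (c1' := cv_shift _ _ c1). assert (c2' := cv_shift _ _ c2).
  split; simpl.
  - set (LHS := fun t => fst (x t) * exp (- (B * sqrt k * (2 * snd (x (S t)) - 1)))).
    assert (cL : Un_cv LHS (pL * exp (- (B * sqrt k * (2 * pR - 1))))).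
    { apply CV_mult; auto. apply ce.
      apply (cv_ext (fun t => (- (B * sqrt k)) * ((2 * snd (x (S t))) - 1))).
      { intros; ring. }
      replace (- (B * sqrt k * (2 * pR - 1))) with ((- (B * sqrt k)) * (2 * pR - 1)) by ring.
      apply CV_mult; [apply cv_const|]. apply CV_minus; [|apply cv_const].
      apply (CV_mult (fun _ => 2)); [apply cv_const|exact c2']. }
    assert (cR : Un_cv LHS (pL - 2 * pL + 1)).
    { apply (cv_ext (fun t => fst (x t) - 2 * fst (x (S t)) + 1)).
      { intro t. unfold LHS. destruct (R1 t) as [e _]. lra. }
      apply CV_plus; [|apply cv_const]. apply CV_minus; auto.
      apply (CV_mult (fun _ => 2)); [apply cv_const|exact c1']. }
    apply (UL_sequence _ _ _ cL cR).
  - set (LHS := fun t => snd (x t) * exp (- (B / sqrt k * (2 * fst (x (S t)) - 1)))).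
    assert (cL : Un_cv LHS (pR * exp (- (B / sqrt k * (2 * pL - 1))))).
    { apply CV_mult; auto. apply ce.
      apply (cv_ext (fun t => (- (B / sqrt k)) * ((2 * fst (x (S t))) - 1))).
      { intros; ring. }
      replace (- (B / sqrt k * (2 * pL - 1))) with ((- (B / sqrt k)) * (2 * pL - 1)) by ring.
      apply CV_mult; [apply cv_const|]. apply CV_minus; [|apply cv_const].
      apply (CV_mult (fun _ => 2)); [apply cv_const|exact c1']. }
    assert (cR : Un_cv LHS (pR - 2 * pR + 1)).
    { apply (cv_ext (fun t => snd (x t) - 2 * snd (x (S t)) + 1)).
      { intro t. unfold LHS. destruct (R1 t) as [_ e]. lra. }
      apply CV_plus; [|apply cv_const]. apply CV_minus; auto.
      apply (CV_mult (fun _ => 2)); [apply cv_const|exact c2']. }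
    apply (UL_sequence _ _ _ cL cR).
Qed.

End Main.

Lemma Efix_exp k B q : 1 <= k -> 0 < fst q -> 0 < snd q ->
  (Efix k B q <-> (exp (B * sqrt k * (1 - 2 * snd q)) = (1 - fst q) / fst q /\
        exp ((B / sqrt k) * (1 - 2 * fst q)) = (1 - snd q) / snd q)).
Proof.
  intros hk h1 h2. unfold Efix, Rel.
  replace (B * sqrt k * (1 - 2 * snd q)) with (- (B * sqrt k * (2 * snd q - 1))) by ring.
  replace ((B / sqrt k) * (1 - 2 * fst q)) with (- (B / sqrt k * (2 * fst q - 1))) by ring.
  set (e1 := exp (- (B * sqrt k * (2 * snd q - 1)))).
  set (e2 := exp (- (B / sqrt k * (2 * fst q - 1)))).
  split; intros [a b]; split.
  - apply Rmult_eq_reg_l with (fst q); [|lra]. rewrite a. field. lra.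
  - apply Rmult_eq_reg_l with (snd q); [|lra]. rewrite b. field. lra.
  - rewrite a. field. lra.
  - rewrite b. field. lra.
Qed.

Theorem lemma10 (k B : R) (hk : 1 <= k) (hB : 0 < B) (hB2 : B <> 2) :
  exists p : R * R,
    (in_unit_square p /\ F B k p = p /\
     forall q : R * R, in_unit_square q -> F B k q = q -> q = p) /\
    (B < 2 -> p = (1/2, 1/2)) /\
    (2 < B ->
       (1/2 < fst p < 1 /\ 1/2 < snd p < 1 /\
        exp (B * sqrt k * (1 - 2 * snd p)) = (1 - fst p) / fst p /\
        exp ((B / sqrt k) * (1 - 2 * fst p)) = (1 - snd p) / snd p) /\
       (forall q : R * R,
          1/2 < fst q < 1 -> 1/2 < snd q < 1 ->
          exp (B * sqrt k * (1 - 2 * snd q)) = (1 - fst q) / fst q ->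
          exp ((B / sqrt k) * (1 - 2 * fst q)) = (1 - snd q) / snd q ->
          q = p)) /\
    (forall a : R * R, in_unit_square a ->
       Un_cv (fun t => fst (Nat.iter t (F B k) a)) (fst p) /\
       Un_cv (fun t => snd (Nat.iter t (F B k) a)) (snd p)).
Proof.
  pose proof (F_props k B hk hB) as Fp.
  pose proof (F_square k B hk hB) as Fs.
  pose proof (iter_mono k B hk hB) as Im.
  pose proof (iter_square k B hk hB) as Is.
  pose proof (Efix_cases k B hk hB) as Ec.
  pose proof (E_unique k B hk hB) as Eu.
  assert (sh : in_unit_square (1/2, 1/2)) by (split; cbn [fst snd] in *; lra).
  assert (s1 : in_unit_square (1, 1)) by (split; cbn [fst snd] in *; lra).
  set (l := fun t => Nat.iter t (F B k) (1/2, 1/2)).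
  set (u := fun t => Nat.iter t (F B k) (1, 1)).
  assert (lS : forall t, in_unit_square (l t)) by (intro; apply Is; auto).
  assert (uS : forall t, in_unit_square (u t)) by (intro; apply Is; auto).
  assert (lg : forall t, le2 (l t) (l (S t))).
  { intro t. unfold l. rewrite Nat.iter_succ_r. apply Im; auto.
    destruct (Fp _ sh) as [a [b _]]. split; cbn [fst snd] in *; lra. }
  assert (ud : forall t, le2 (u (S t)) (u t)).
  { intro t. unfold u. rewrite Nat.iter_succ_r. apply Im; auto.
    destruct (Fp _ s1) as [a [b _]]. split; cbn [fst snd] in *; lra. }
  assert (lu : forall t, le2 (l t) (u t)).
  { intro t. apply Im; auto. split; cbn [fst snd] in *; lra. }
  assert (sw : forall a, in_unit_square a -> forall t,
             le2 (l t) (Nat.iter (S t) (F B k) a) /\ le2 (Nat.iter (S t) (F B k) a) (u t)).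
  { intros a ha t. rewrite Nat.iter_succ_r. destruct (Fp _ ha) as [a1 [a2 _]].
    split; apply Im; auto; split; cbn [fst snd] in *; lra. }
  destruct (growing_cv (fun t => fst (l t))) as [lL cLL].
  { intro n. apply lg. }
  { exists 1. intros x [i ->]. apply lS. }
  destruct (growing_cv (fun t => snd (l t))) as [lR cLR].
  { intro n. apply lg. }
  { exists 1. intros x [i ->]. apply lS. }
  destruct (decreasing_cv (fun t => fst (u t))) as [uL cUL].
  { intro n. apply ud. }
  { exists 0. intros x [i ->]. unfold opp_seq. destruct (uS i) as [[a _] _]. lra. }
  destruct (decreasing_cv (fun t => snd (u t))) as [uR cUR].
  { intro n. apply ud. }
  { exists 0. intros x [i ->]. unfold opp_seq. destruct (uS i) as [_ [a _]]. lra. }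
  assert (EL : Efix k B (lL, lR)) by (apply (limit_fix k B hk hB l); auto).
  assert (EU : Efix k B (uL, uR)) by (apply (limit_fix k B hk hB u); auto).
  assert (bl1 : 1/2 <= lL) by (apply (growing_ineq (fun t => fst (l t)) lL (fun n => proj1 (lg n)) cLL 0%nat)).
  assert (bl2 : 1/2 <= lR) by (apply (growing_ineq (fun t => snd (l t)) lR (fun n => proj2 (lg n)) cLR 0%nat)).
  assert (bu1 : uL <= 1) by (apply (decreasing_ineq (fun t => fst (u t)) uL (fun n => proj1 (ud n)) cUL 0%nat)).
  assert (bu2 : uR <= 1) by (apply (decreasing_ineq (fun t => snd (u t)) uR (fun n => proj2 (ud n)) cUR 0%nat)).
  assert (blu1 : lL <= uL) by (apply (Rle_cv_lim (fun n => proj1 (lu n)) cLL cUL)).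
  assert (blu2 : lR <= uR) by (apply (Rle_cv_lim (fun n => proj2 (lu n)) cLR cUR)).
  assert (conv : forall pL pR, lL = pL -> lR = pR -> uL = pL -> uR = pR ->
     forall a : R * R, in_unit_square a ->
       Un_cv (fun t => fst (Nat.iter t (F B k) a)) pL /\
       Un_cv (fun t => snd (Nat.iter t (F B k) a)) pR).
  { intros pL pR e1 e2 e3 e4 a ha. subst. split.
    - apply (cv_squeeze (fun t => fst (l t)) (fun t => fst (u t))); auto.
      intro n. destruct (sw a ha n) as [[x _] [y _]]. lra.
    - apply (cv_squeeze (fun t => snd (l t)) (fun t => snd (u t))); auto.
      intro n. destruct (sw a ha n) as [[_ x] [_ y]]. lra. }
  destruct (Rtotal_order B 2) as [hb|[hb|hb]]; [| contradiction |].
  -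
    assert (HL : (lL, lR) = (1/2, 1/2)).
    { destruct (Ec (lL, lR) EL) as [e|[i1 i2]]; simpl; try lra; auto.
      exfalso. apply (E_none k B hk hB (lL, lR)); auto; lra. }
    assert (HU : (uL, uR) = (1/2, 1/2)).
    { destruct (Ec (uL, uR) EU) as [e|[i1 i2]]; simpl; try lra; auto.
      exfalso. apply (E_none k B hk hB (uL, uR)); auto; lra. }
    injection HL as HL1 HL2. injection HU as HU1 HU2.
    exists (1/2, 1/2). split; [|split; [|split]].
    + split; [exact sh|split]. apply half_F; lra.
      intros q hq hf. destruct (Fp q hq) as [b1 [b2 r]]. rewrite hf in b1, b2, r.
      destruct (Ec q r b1 b2) as [e|[i1 i2]]; auto.
      exfalso. apply (E_none k B hk hB q); auto; lra.
    + auto.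
    + intros; lra.
    + apply conv; auto.
  -
    assert (l1 : 1/2 < lL).
    { pose proof (growing_ineq (fun t => fst (l t)) lL (fun n => proj1 (lg n)) cLL 1%nat).
      cbv beta in H. unfold l in H. change (fst (F B k (1/2, 1/2)) <= lL) in H. pose proof (half_notF k B hk hB hb). lra. }
    assert (IL : 1/2 < lL < 1 /\ 1/2 < lR < 1).
    { destruct (Ec (lL, lR) EL) as [e|[i1 i2]]; simpl; try lra.
      injection e; lra. simpl in *; auto. }
    assert (IU : 1/2 < uL < 1 /\ 1/2 < uR < 1).
    { destruct (Ec (uL, uR) EU) as [e|[i1 i2]]; simpl; try lra.
      injection e; lra. simpl in *; auto. }
    assert (HLU : (uL, uR) = (lL, lR)).
    { apply Eu; simpl; try tauto; auto. }
    injection HLU as HU1 HU2.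
    exists (lL, lR). split; [|split; [|split]].
    + split; [split; cbn [fst snd] in *; lra|split]. apply (E_to_F k B hk hB); simpl; try tauto; auto.
      intros q hq hf. destruct (Fp q hq) as [b1 [b2 r]]. rewrite hf in b1, b2, r.
      destruct (Ec q r b1 b2) as [e|[i1 i2]].
      * exfalso. subst q. pose proof (half_notF k B hk hB hb). rewrite hf in H. simpl in H. lra.
      * apply Eu; simpl; try tauto; auto.
    + intros; lra.
    + intros _. split.
      * simpl. split; [tauto|split; [tauto|]].
        apply (Efix_exp k B (lL, lR) hk); simpl; try lra; auto.
      * intros q q1 q2 e1 e2. apply Eu; simpl; try tauto; auto.
        apply (Efix_exp k B q hk); try lra; auto.
    + apply conv; auto.
Qed.
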